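(* Let $B=A_P[y_1,y_2;\sigma,\delta,\tau]$ be a right double extension of a $K$-algebra $A$, let $k,l\in K$ and $0\neq z=ky_1+ly_2\in B$. Then $zA\subseteq Az+A$ if and only if $kl\sigma_{11}+l^2\sigma_{21}=kl\sigma_{22}+k^2\sigma_{12}$.
   Context: $K$ is a field. Let $A$ be a subalgebra of a $K$-algebra $B$. $B$ is a right double extension of $A$ if: (i) $B$ is generated by $A$ and $y_1,y_2$; (ii) $y_2y_1=p_{12}y_1y_2+p_{11}y_1^2+\tau_1y_1+\tau_2y_2+\tau_0$ for some $p_{12},p_{11}\in K$, $\tau_0,\tau_1,\tau_2\in A$; (iii) $B$ is a free left $A$-module with basis $\{y_1^iy_2^j:i,j\ge0\}$; (iv) $y_1A+y_2A+A\subseteq Ay_1+Ay_2+A$, i.e. there are ($K$-linear) maps $\sigma_{ij},\delta_i\colon A\to A$ ($i,j=1,2$) with $y_1a=\sigma_{11}(a)y_1+\sigma_{12}(a)y_2+\delta_1(a)$ and $y_2a=\sigma_{21}(a)y_1+\sigma_{22}(a)y_2+\delta_2(a)$ for all $a\in A$. One writes $B=A_P[y_1,y_2;\sigma,\delta,\tau]$ with $\sigma=(\sigma_{ij})$, $\delta=(\delta_1,\delta_2)^T$, $P=\{p_{12},p_{11}\}$, $\tau=\{\tau_0,\tau_1,\tau_2\}$. *)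

(* Defs.v *)
From HB Require Import structures.
From mathcomp Require Import all_boot all_order all_algebra.
Set Implicit Arguments. Unset Strict Implicit. Unset Printing Implicit Defensive.
Import GRing.Theory.
Local Open Scope ring_scope.

Definition is_subalgebra (K : fieldType) (B : algType K) (A : B -> Prop) : Prop :=
  [/\ A 1,
      (forall a b, A a -> A b -> A (a + b)),
      (forall (c : K) a, A a -> A (c *: a)) &
      (forall a b, A a -> A b -> A (a * b))].

Definition generated_by (K : fieldType) (B : algType K) (A : B -> Prop)
  (y1 y2 : B) : Prop :=
  forall S : B -> Prop, is_subalgebra S -> (forall a, A a -> S a) ->
    S y1 -> S y2 -> forall b, S b.

Definition free_left_basis (K : fieldType) (B : algType K) (A : B -> Prop)
  (y1 y2 : B) : Prop :=
  (forall b : B, exists (n : nat) (c : nat -> nat -> B),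
      (forall i j, A (c i j)) /\
      b = \sum_(i < n) \sum_(j < n) c i j * (y1 ^+ i * y2 ^+ j)) /\
  (forall (n : nat) (c : nat -> nat -> B),
      (forall i j, A (c i j)) ->
      \sum_(i < n) \sum_(j < n) c i j * (y1 ^+ i * y2 ^+ j) = 0 ->
      forall i j, (i < n)%N -> (j < n)%N -> c i j = 0).

Definition right_double_extension (K : fieldType) (B : algType K)
  (A : B -> Prop) (y1 y2 : B) (p12 p11 : K) (tau0 tau1 tau2 : B)
  (s11 s12 s21 s22 d1 d2 : B -> B) : Prop :=
  [/\ is_subalgebra A,
      generated_by A y1 y2,
      [/\ A tau0, A tau1, A tau2 &
          y2 * y1 = p12 *: (y1 * y2) + p11 *: (y1 ^+ 2)
                    + tau1 * y1 + tau2 * y2 + tau0],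
      free_left_basis A y1 y2 &
      forall a, A a ->
        [/\ A (s11 a), A (s12 a), A (s21 a) & A (s22 a)] /\
        A (d1 a) /\ A (d2 a) /\
        y1 * a = s11 a * y1 + s12 a * y2 + d1 a /\
        y2 * a = s21 a * y1 + s22 a * y2 + d2 a].

(* Main.v *)
Require Import Defs.
From HB Require Import structures.
From mathcomp Require Import all_boot all_order all_algebra.
Import GRing.Theory.
Local Open Scope ring_scope.

Theorem lemma2p3 (K : fieldType) (B : algType K) (A : B -> Prop) (y1 y2 : B)
  (p12 p11 : K) (tau0 tau1 tau2 : B) (s11 s12 s21 s22 d1 d2 : B -> B)
  (k l : K) :
  right_double_extension A y1 y2 p12 p11 tau0 tau1 tau2 s11 s12 s21 s22 d1 d2 ->
  k *: y1 + l *: y2 != 0 ->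
  (forall a, A a -> exists a' a'', A a' /\ A a'' /\
       (k *: y1 + l *: y2) * a = a' * (k *: y1 + l *: y2) + a'')
  <->
  (forall a, A a ->
     (k * l) *: s11 a + (l ^+ 2) *: s21 a = (k * l) *: s22 a + (k ^+ 2) *: s12 a).
Proof.
move=> [[A1 AD AZ AM] _ _ [_ Free] Hiv] Hz.
have A0 : A 0 by rewrite -(scale0r 1); apply: AZ.
have AB : forall x y, A x -> A y -> A (x - y).
  by move=> x y Ax Ay; apply: AD => //; rewrite -scaleN1r; apply: AZ.
have zaE : forall a, A a -> (k *: y1 + l *: y2) * a =
   (k *: s11 a + l *: s21 a) * y1 + (k *: s12 a + l *: s22 a) * y2
   + (k *: d1 a + l *: d2 a).
  move=> a Aa; have [_ [_ [_ [E1 E2]]]] := Hiv a Aa.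
  rewrite mulrDl -!scalerAl E1 E2 !scalerDr !scalerAl.
  by rewrite !mulrDl addrACA [X in X + _ = _]addrACA.
split.
- move=> H a Aa.
  have [[As11 As12 As21 As22] [Ad1 [Ad2 _]]] := Hiv a Aa.
  have [a' [a'' [Aa' [Aa'' E]]]] := H a Aa.
  set u1 := k *: s11 a + l *: s21 a - k *: a'.
  set u2 := k *: s12 a + l *: s22 a - l *: a'.
  set u0 := k *: d1 a + l *: d2 a - a''.
  have Au1 : A u1 by apply: AB; [apply: AD; apply: AZ|apply: AZ].
  have Au2 : A u2 by apply: AB; [apply: AD; apply: AZ|apply: AZ].
  have Au0 : A u0 by apply: AB => //; apply: AD; apply: AZ.
  have Eq : u0 + u1 * y1 + u2 * y2 = 0.
    move: E; rewrite zaE // mulrDr -!scalerAr => E.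
    rewrite /u0 /u1 /u2 !mulrBl -!scalerAl.
    set D := k *: d1 a + l *: d2 a; set X := _ * y1; set Y := _ * y2.
    set P := k *: (a' * y1); set Q := l *: (a' * y2).
    rewrite (addrACA D) -opprD (addrACA (D + X)) -opprD.
    rewrite [D + X]addrC -[X + D + Y]addrA [D + Y]addrC addrA E.
    by rewrite [a'' + P]addrC -[P + a'' + Q]addrA [a'' + Q]addrC addrA subrr.
  pose c (i j : nat) : B := if (i == 0%N) && (j == 0%N) then u0
    else if (i == 1%N) && (j == 0%N) then u1
    else if (i == 0%N) && (j == 1%N) then u2 else 0.
  have Ac : forall i j, A (c i j).
    by move=> i j; rewrite /c; case: ifP => _ //; case: ifP => _ //; case: ifP.
  have Hs : \sum_(i < 2) \sum_(j < 2) c i j * (y1 ^+ i * y2 ^+ j) = 0.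
    rewrite !big_ord_recr !big_ord0 /= /c /=.
    by rewrite !expr0 !expr1 !mul0r !mulr1 !mul1r !add0r !addr0 -Eq addrAC.
  have F1 := Free 2%N c Ac Hs 1%N 0%N erefl erefl.
  have F2 := Free 2%N c Ac Hs 0%N 1%N erefl erefl.
  move: F1 F2; rewrite /c /= /u1 /u2 => /eqP; rewrite subr_eq0 => /eqP F1.
  move=> /eqP; rewrite subr_eq0 => /eqP F2.
  have -> : (k * l) *: s11 a + (l ^+ 2) *: s21 a = l *: (k *: s11 a + l *: s21 a).
    by rewrite scalerDr !scalerA mulrC expr2.
  have -> : (k * l) *: s22 a + (k ^+ 2) *: s12 a = k *: (k *: s12 a + l *: s22 a).
    by rewrite addrC scalerDr !scalerA expr2.
  by rewrite F1 F2 !scalerA mulrC.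
- move=> H a Aa.
  have [[As11 As12 As21 As22] [Ad1 [Ad2 _]]] := Hiv a Aa.
  have Hc := H a Aa.
  exists (if k != 0 then k^-1 *: (k *: s11 a + l *: s21 a)
          else l^-1 *: (k *: s12 a + l *: s22 a)).
  exists (k *: d1 a + l *: d2 a).
  split; first by case: (k != 0); apply: (AZ _ _); apply: AD; apply: (AZ _ _).
  split; first by apply: AD; apply: AZ.
  rewrite zaE // mulrDr -!scalerAr !scalerAl; congr (_ + _).
  case: (eqVneq k 0) => [k0|kn0] /=.
  + have ln0 : l != 0.
      by apply: contraNneq Hz => l0; rewrite k0 l0 !scale0r add0r.
    move: Hc; rewrite k0 !mul0r !scale0r expr0n /= scale0r !add0r => Hc.
    have s21z : s21 a = 0.
      have : l ^+ 2 *: s21 a == 0 by rewrite Hc.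
      rewrite scaler_eq0 expf_eq0 (negbTE ln0) andbF /=. exact: eqP.
    by rewrite s21z scaler0 !mul0r !add0r scalerA mulfV // scale1r.
  + rewrite !scalerA mulfV // scale1r; congr (_ + _); congr (_ * y2).
    apply: (scalerI kn0).
    rewrite scalerA mulrCA mulfV // mulr1.
    have -> : l *: (k *: s11 a + l *: s21 a) = (k * l) *: s11 a + (l ^+ 2) *: s21 a.
      by rewrite scalerDr !scalerA mulrC expr2.
    by rewrite Hc addrC scalerDr !scalerA expr2.
Qed.
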